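(* Let $\Sigma$ be a finite alphabet with $|\Sigma|\ge 2$, let $m,n$ be positive integers with $m\ge 2$, and let $\rho,\rho_1,\rho_2,\rho_3$ be real numbers with $0<\rho<1$, $\rho_1>0$, $\rho_2>0$, $\rho_3>0$ and $\rho_1+\rho_2+\rho_3\le 1$. Then the Markov chains with transition matrices $S^{\mathfrak{N}(n)}_{\rho_1,\rho_2,\rho_3}$, $S^{\mathfrak{N}_m(n)}_{\rho_1,\rho_2,\rho_3}$ and $S^{\mathfrak{N}'_m(n)}_{\rho_1,\rho_2,\rho_3}$ are irreducible, and so are the Markov chains with transition matrices $S^{\mathfrak{N}(n)^\bullet}_{\rho}$, $S^{\mathfrak{N}_m(n)^\bullet}_{\rho}$ and $S^{\mathfrak{N}'_m(n)^\bullet}_{\rho}$.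
   Context: A non-deterministic automaton (NFA) over $\Sigma$ is a tuple $(Q,\Sigma,\Delta,I,F)$ with $Q$ a finite set of states, $\Delta\subseteq Q\times\Sigma\times Q$ the transitions, $I\subseteq Q$ the initial states and $F\subseteq Q$ the final states. A path is a sequence of transitions $(p_0,a_0,q_0)\cdots(p_k,a_k,q_k)$ with $q_i=p_{i+1}$. The NFA is accessible if every state is reachable by a path from an initial state, co-accessible if from every state a final state is reachable by a path, and trim if both. $\mathfrak{N}(n)$ is the set of trim NFAs over $\Sigma$ with state set $Q=\{1,\dots,n\}$. $\mathfrak{N}_m(n)$ is the set of automata in $\mathfrak{N}(n)$ such that for each state $p$ there are at most $m$ pairs $(a,q)$ with $(p,a,q)\in\Delta$. $\mathfrak{N}'_m(n)$ is the set of automata in $\mathfrak{N}(n)$ such that for each state $p$ and each letter $a$ there are at most $m$ states $q$ with $(p,a,q)\in\Delta$. For a class $\mathfrak{X}$, $\mathfrak{X}^\bullet$ is the subclass of automata whose set of initial states is exactly $\{1\}$. For an automaton $\mathcal{A}=(Q,\Sigma,\Delta,I,F)$: $\mathsf{Ch_{init}}(\mathcal{A},q)$ is $\mathcal{A}$ with $q$ removed from $I$ if $q\in I$ and added to $I$ otherwise; $\mathsf{Ch_{final}}(\mathcal{A},q)$ is defined similarly with $F$; $\mathsf{Ch_{trans}}(\mathcal{A},(p,a,q))$ is $\mathcal{A}$ with $(p,a,q)$ removed from $\Delta$ if present and added otherwise. For a class $\mathfrak{X}$ of automata with state set $Q=\{1,\dots,n\}$ and reals $\rho_i\in[0,1]$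 with $\rho_1+\rho_2+\rho_3\le1$, the matrix $S^{\mathfrak{X}}_{\rho_1,\rho_2,\rho_3}$ on $\mathfrak{X}\times\mathfrak{X}$ is: for $x\ne y$, $S(x,y)=\rho_1/n$ if $y=\mathsf{Ch_{init}}(x,q)$ for some $q$; $S(x,y)=\rho_2/n$ if $y=\mathsf{Ch_{final}}(x,q)$ for some $q$; $S(x,y)=\rho_3/(|\Sigma|n^2)$ if $y=\mathsf{Ch_{trans}}(x,(p,a,q))$ for some $(p,a,q)\in Q\times\Sigma\times Q$; $S(x,y)=0$ otherwise; and $S(x,x)=1-\sum_{y\ne x}S(x,y)$. For $\mathfrak{X}\in\{\mathfrak{N}(n),\mathfrak{N}_m(n),\mathfrak{N}'_m(n)\}$ and $0<\rho<1$, $S^{\mathfrak{X}^\bullet}_\rho$ is the matrix $S^{\mathfrak{X}^\bullet}_{0,\rho,1-\rho}$ defined by the same rules on the class $\mathfrak{X}^\bullet$. A Markov chain is irreducible if the directed graph on its state space with an edge $x\to y$ whenever the transition probability from $x$ to $y$ is nonzero is strongly connected. *)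

(* Defs.v *)
From mathcomp Require Import all_boot all_order all_algebra.
Set Implicit Arguments. Unset Strict Implicit. Unset Printing Implicit Defensive.
Import Order.TTheory GRing.Theory Num.Theory.
Local Open Scope ring_scope.

(* An NFA over alphabet A with state set 'I_n (state k+1 of the paper is the
   ordinal k) is a triple (I, F, Delta). *)
Definition nfa (n : nat) (A : finType) : finType :=
  ({set 'I_n} * {set 'I_n} * {set ('I_n * A * 'I_n)})%type.

Section NFA.
Variables (n : nat) (A : finType).
Implicit Types (x y : nfa n A).

Definition init x : {set 'I_n} := x.1.1.
Definition final x : {set 'I_n} := x.1.2.
Definition trans x : {set ('I_n * A * 'I_n)} := x.2.

Definition step x : rel 'I_n := fun p q => [exists a : A, (p, a, q) \in trans x].

Definition accessible x : bool :=
  [forall q : 'I_n, [exists i in init x, connect (step x) i q]].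
Definition coaccessible x : bool :=
  [forall q : 'I_n, [exists f in final x, connect (step x) q f]].
Definition trim x : bool := accessible x && coaccessible x.

Definition classN : pred (nfa n A) := fun x => trim x.
Definition classNm (m : nat) : pred (nfa n A) := fun x =>
  trim x && [forall p : 'I_n,
     #|[set aq : A * 'I_n | (p, aq.1, aq.2) \in trans x]| <= m]%N.
Definition classN'm (m : nat) : pred (nfa n A) := fun x =>
  trim x && [forall p : 'I_n, forall a : A,
     #|[set q : 'I_n | (p, a, q) \in trans x]| <= m]%N.

Definition bullet (X : pred (nfa n A)) : pred (nfa n A) := fun x =>
  X x && (init x == [set i : 'I_n | val i == 0%N]).

Definition toggle {T : finType} (S : {set T}) (t : T) : {set T} :=
  if t \in S then S :\ t else t |: S.

Definition Ch_init x (q : 'I_n) : nfa n A := (toggle (init x) q, final x, trans x).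
Definition Ch_final x (q : 'I_n) : nfa n A := (init x, toggle (final x) q, trans x).
Definition Ch_trans x (t : 'I_n * A * 'I_n) : nfa n A :=
  (init x, final x, toggle (trans x) t).

Variable R : realFieldType.

Definition S_off (r1 r2 r3 : R) x y : R :=
  if [exists q, y == Ch_init x q] then r1 / n%:R
  else if [exists q, y == Ch_final x q] then r2 / n%:R
  else if [exists t, y == Ch_trans x t] then r3 / (#|A|%:R * (n ^ 2)%:R)
  else 0.

(* the matrix S^X_{rho1,rho2,rho3}, meaningful on X x X *)
Definition Smat (X : pred (nfa n A)) (r1 r2 r3 : R) x y : R :=
  if x == y then 1 - \sum_(z : nfa n A | X z && (z != x)) S_off r1 r2 r3 x z
  else S_off r1 r2 r3 x y.

Definition Smat_bullet (X : pred (nfa n A)) (r : R) x y : R :=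
  Smat (bullet X) 0 r (1 - r) x y.

Definition irreducible (X : pred (nfa n A)) (M : nfa n A -> nfa n A -> R) : Prop :=
  forall x y, X x -> X y ->
    exists s : seq (nfa n A),
      [/\ all X s, path (fun u v => M u v != 0) x s & last x s = y].

End NFA.

Arguments classN n A : clear implicits.
Arguments classNm n A m : clear implicits.
Arguments classN'm n A m : clear implicits.

(* Main.v *)
Require Import Defs.
From mathcomp Require Import all_boot all_order all_algebra zify.
Set Implicit Arguments. Unset Strict Implicit. Unset Printing Implicit Defensive.
Import Order.TTheory GRing.Theory Num.Theory.

Lemma connect_inv (T : finType) (e : rel T) (P : pred T) x y :
  P x -> (forall u v, P u -> e u v -> P v) -> connect e x y -> P y.
Proof.
move=> Px cl /connectP [p pth ->]; elim: p x Px pth => //= z p IH x Px /andP [exz pth].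
exact: IH (cl _ _ Px exz) pth.
Qed.

Lemma toggle_neq (T : finType) (S : {set T}) t : toggle S t != S.
Proof.
rewrite /toggle; case: ifP => tS; apply/eqP => E.
- by move: tS; rewrite -E setD11.
- by move: tS; rewrite -E setU11.
Qed.

Lemma toggle_in (T : finType) (S : {set T}) t : t \in S -> toggle S t = S :\ t.
Proof. by rewrite /toggle => ->. Qed.

Lemma toggle_out (T : finType) (S : {set T}) t : t \notin S -> toggle S t = t |: S.
Proof. by rewrite /toggle => /negbTE ->. Qed.

Lemma toggleK (T : finType) (S : {set T}) t : toggle (toggle S t) t = S.
Proof.
case tS: (t \in S).
- by rewrite (toggle_in tS) toggle_out ?setD11 // setD1K.
- by rewrite (toggle_out (negbT tS)) toggle_in ?setU11 // setU1K ?tS.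
Qed.

Lemma grow_lemma (K T : finType) (E : rel T) (f : {set K} -> T) (Q : pred {set K})
  (mv : forall S t, Q S -> Q (toggle S t) -> E (f S) (f (toggle S t))) (S : {set K}) :
  (forall S' : {set K}, S \subset S' -> Q S') -> connect E (f S) (f setT).
Proof.
move: {2}#|~: S| (leqnn #|~: S|) => k; elim: k S => [|k IH] S Hk HQ.
  have -> : S = setT by by move: Hk; rewrite leqn0 cards_eq0 => /eqP H; rewrite -(setCK S) H setC0.
  exact: connect0.
case: (boolP (~: S == set0)) => [/eqP S0|/set0Pn [q qS]].
  have -> : S = setT by rewrite -(setCK S) S0 setC0.
  exact: connect0.
rewrite inE in qS.
have tq : toggle S q = q |: S by rewrite toggle_out.
apply: connect_trans (connect1 (mv _ q (HQ _ (subxx _)) _)) _.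
  by apply: HQ; rewrite tq subsetUr.
rewrite tq; apply: IH => [|S' HS']; last first.
  by apply: HQ; apply: subset_trans HS'; apply: subsetUr.
have -> : ~: (q |: S) = (~: S) :\ q by apply/setP => z; rewrite !inE negb_or andbC.
by move: Hk; rewrite (cardsD1 q (~: S)) inE qS.
Qed.

Lemma shrink_lemma (K T : finType) (E : rel T) (f : {set K} -> T) (Q : pred {set K})
  (mv : forall S t, Q S -> Q (toggle S t) -> E (f S) (f (toggle S t))) (S S0 : {set K}) :
  S0 \subset S -> (forall S' : {set K}, S0 \subset S' -> S' \subset S -> Q S') ->
  connect E (f S) (f S0).
Proof.
move: {2}#|S :\: S0| (leqnn #|S :\: S0|) => k; elim: k S => [|k IH] S Hk sub HQ.
  have -> : S = S0.
    apply/eqP; rewrite eqEsubset sub andbT.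
    by rewrite -setD_eq0 -cards_eq0 -leqn0.
  exact: connect0.
case: (boolP (S :\: S0 == set0)) => [|/set0Pn [q qS]].
  rewrite setD_eq0 => S0'; have -> : S = S0 by apply/eqP; rewrite eqEsubset sub S0'.
  exact: connect0.
move: (qS); rewrite inE => /andP [qS0 qS1].
have tq : toggle S q = S :\ q by rewrite toggle_in.
have HQ' : Q (S :\ q).
  apply: HQ; last exact: subD1set.
  by apply/subsetP => z z0; rewrite !inE (subsetP sub _ z0) andbT; apply: contraNneq qS0 => <-.
apply: connect_trans (connect1 (mv _ q (HQ _ sub (subxx _)) _)) _.
  by rewrite tq.
rewrite tq; apply: IH => [| |S' H1 H2].
- have -> : (S :\ q) :\: S0 = (S :\: S0) :\ q.
    by apply/setP => z; rewrite !inE andbCA.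
  by move: Hk; rewrite (cardsD1 q (S :\: S0)) qS.
- by apply/subsetP => z z0; rewrite !inE (subsetP sub _ z0) andbT; apply: contraNneq qS0 => <-.
- by apply: HQ => //; apply: subset_trans H2 (subD1set _ _).
Qed.

Section SmatNZ.
Variables (n : nat) (A : finType) (R : realFieldType).
Local Open Scope ring_scope.

Lemma Smat_trans (Y : pred (nfa n A)) (s1 s2 s3 : R) I F D t :
  (0 < n)%N -> (0 < #|A|)%N ->
  s3 != 0 -> Smat Y s1 s2 s3 (I,F,D) (I,F,toggle D t) != 0.
Proof.
move=> n0 A0 s30; rewrite /Smat ifF; last by apply/eqP => -[] /eqP; rewrite eq_sym (negbTE (toggle_neq _ _)).
rewrite /S_off.
case: ifP => [/existsP [q /eqP /(congr1 (fun x => x.2)) /= /eqP]|_].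
  by rewrite (negbTE (toggle_neq _ _)).
case: ifP => [/existsP [q /eqP /(congr1 (fun x => x.2)) /= /eqP]|_].
  by rewrite (negbTE (toggle_neq _ _)).
case: ifP => [_|/negbT/existsPn/(_ t)]; last by rewrite eqxx.
rewrite mulf_neq0 // invr_eq0 mulf_neq0 // pnatr_eq0 -lt0n //.
by rewrite expn_gt0 n0.
Qed.

Lemma Smat_final (Y : pred (nfa n A)) (s1 s2 s3 : R) I F D q :
  (0 < n)%N -> s2 != 0 -> Smat Y s1 s2 s3 (I,F,D) (I,toggle F q,D) != 0.
Proof.
move=> n0 s20; rewrite /Smat ifF; last by apply/eqP => -[] /eqP; rewrite eq_sym (negbTE (toggle_neq _ _)).
rewrite /S_off.
case: ifP => [/existsP [q' /eqP /(congr1 (fun x => x.1.2)) /= /eqP]|_].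
  by rewrite (negbTE (toggle_neq _ _)).
case: ifP => [_|/negbT/existsPn/(_ q)]; last by rewrite eqxx.
by rewrite mulf_neq0 // invr_eq0 pnatr_eq0 -lt0n.
Qed.

Lemma Smat_init (Y : pred (nfa n A)) (s1 s2 s3 : R) I F D q :
  (0 < n)%N -> s1 != 0 -> Smat Y s1 s2 s3 (I,F,D) (toggle I q,F,D) != 0.
Proof.
move=> n0 s10; rewrite /Smat ifF; last by apply/eqP => -[] /eqP; rewrite eq_sym (negbTE (toggle_neq _ _)).
rewrite /S_off.
case: ifP => [_|/negbT/existsPn/(_ q)]; last by rewrite eqxx.
by rewrite mulf_neq0 // invr_eq0 pnatr_eq0 -lt0n.
Qed.

Definition Esym (Y : pred (nfa n A)) (M : nfa n A -> nfa n A -> R) : rel (nfa n A) :=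
  fun u v => [&& Y u, Y v, M u v != 0 & M v u != 0].

Lemma Esym_sym Y M : symmetric (Esym Y M).
Proof. by move=> u v; apply/and4P/and4P => -[? ? ? ?]; split. Qed.

Lemma irr_of_connect (Y : pred (nfa n A)) M c :
  (forall x, Y x -> connect (Esym Y M) x c) -> irreducible Y M.
Proof.
move=> H x y Yx Yy.
have: connect (Esym Y M) x y.
  apply: connect_trans (H x Yx) _.
  by rewrite (sym_connect_sym (@Esym_sym Y M)); apply: H.
case/connectP => p pth ->; exists p; split => //.
  elim: p x {Yx H} pth => //= z p IH x /andP [/and4P [_ Yz _ _] pth].
  by rewrite Yz (IH z pth).
by apply: sub_path pth => u v /and4P [].
Qed.
End SmatNZ.

Section Trim.
Variables (n : nat) (A : finType).
Implicit Types (I F : {set 'I_n}) (D : {set 'I_n * A * 'I_n}).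

Lemma connect_mono D D' p q : D \subset D' ->
  connect (step (setT, setT, D)) p q -> connect (step (setT, setT, D')) p q.
Proof.
move=> sD; apply: connect_sub => u v /existsP [a h]; apply: connect1.
by apply/existsP; exists a; apply: (subsetP sD).
Qed.

Lemma acc_mono I I' F F' D D' : I \subset I' -> D \subset D' ->
  accessible (I,F,D) -> accessible (I',F',D').
Proof.
move=> sI sD /forallP H; apply/forallP => q; case/exists_inP: (H q) => i iI ci.
apply/exists_inP; exists i; first exact: (subsetP sI).
exact: (@connect_mono D D').
Qed.

Lemma coacc_mono I I' F F' D D' : F \subset F' -> D \subset D' ->
  coaccessible (I,F,D) -> coaccessible (I',F',D').
Proof.
move=> sF sD /forallP H; apply/forallP => q; case/exists_inP: (H q) => i iI ci.
apply/exists_inP; exists i; first exact: (subsetP sF).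
exact: (@connect_mono D D').
Qed.

Lemma trim_TT D : trim (setT, setT, D).
Proof.
apply/andP; split; apply/forallP => q; apply/exists_inP; exists q => //; exact: connect0.
Qed.
End Trim.

Section NonBullet.
Variables (n : nat) (A : finType) (R : realFieldType).
Variable (X : pred (nfa n A)) (Dc : pred {set 'I_n * A * 'I_n}).
Hypothesis XE : forall x, X x = trim x && Dc x.2.
Hypothesis Dc_sub : forall D D' : {set 'I_n * A * 'I_n}, D' \subset D -> Dc D -> Dc D'.

Lemma nonbullet (s1 s2 s3 : R) : (0 < n)%N -> (0 < #|A|)%N ->
  (s1 != 0)%R -> (s2 != 0)%R -> (s3 != 0)%R -> irreducible X (Smat X s1 s2 s3).
Proof.
move=> n0 A0 s10 s20 s30.
apply: (@irr_of_connect _ _ _ _ _ (setT, setT, set0)) => -[[I F] D] Xx.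
pose E := Esym X (Smat X s1 s2 s3).
have e1 : connect E (I,F,D) (I,setT,D).
  apply: (@grow_lemma _ _ E (fun F' => (I,F',D)) (fun F' => X (I,F',D))).
    move=> S q XS XS'; rewrite /E /Esym XS XS' Smat_final //=.
    by rewrite -{2}(toggleK S q) Smat_final.
  move=> F' sF; move: Xx; rewrite !XE /trim /= => /andP [/andP [H1 H2] ->].
  by rewrite (acc_mono F' (subxx _) (subxx _) H1) (coacc_mono I sF (subxx _) H2).
have e2 : connect E (I,setT,D) (setT,setT,D).
  apply: (@grow_lemma _ _ E (fun I' => (I',setT,D)) (fun I' => X (I',setT,D))).
    move=> S q XS XS'; rewrite /E /Esym XS XS' Smat_init //=.
    by rewrite -{2}(toggleK S q) Smat_init.
  move=> I' sI; move: Xx; rewrite !XE /trim /= => /andP [/andP [H1 H2] ->].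
  by rewrite (acc_mono setT sI (subxx _) H1) (coacc_mono I' (subsetT _) (subxx _) H2).
have e3 : connect E (setT,setT,D) (setT,setT,set0).
  apply: (@shrink_lemma _ _ E (fun D' => (setT,setT,D')) (fun D' => X (setT,setT,D'))).
  - move=> S q XS XS'; rewrite /E /Esym XS XS' Smat_trans //=.
    by rewrite -{2}(toggleK S q) Smat_trans.
  - exact: sub0set.
  - move=> D' _ sD; rewrite XE trim_TT /=.
    by move: Xx; rewrite XE => /andP [_]; apply: Dc_sub.
exact: connect_trans e1 (connect_trans e2 e3).
Qed.
End NonBullet.

Section Core.
Variables (n' : nat) (A : finType) (a0 : A).
Local Notation N := n'.+1.
Local Notation edge := ('I_N * A * 'I_N)%type.
Implicit Types (D : {set edge}) (e : edge).

Definition stp D : rel 'I_N := fun p q => [exists a, (p,a,q) \in D].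
Definition acc0 D := [forall q, connect (stp D) ord0 q].
Definition out D (p : 'I_N) := [set aq : A * 'I_N | (p, aq.1, aq.2) \in D].
Definition Pk (k : nat) : {set edge} :=
  [set t : edge | [&& t.1.2 == a0, val t.2 == (val t.1.1).+1 & val t.1.1 < k]].

Lemma edge_eta e : e = (e.1.1, e.1.2, e.2).
Proof. by case: e => [[]]. Qed.

Lemma stp_mono D D' p q : D \subset D' -> connect (stp D) p q -> connect (stp D') p q.
Proof.
move=> sD; apply: connect_sub => u v /existsP [a h]; apply: connect1.
by apply/existsP; exists a; apply: (subsetP sD).
Qed.

Lemma acc0_mono D D' : D \subset D' -> acc0 D -> acc0 D'.
Proof. by move=> sD /forallP H; apply/forallP => q; apply: stp_mono sD (H q). Qed.

Lemma stp_edge D e : e \in D -> stp D e.1.1 e.2.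
Proof. by move=> eD; apply/existsP; exists e.1.2; rewrite -edge_eta. Qed.

Lemma reroute D e : e \in D -> acc0 D -> connect (stp (D :\ e)) ord0 e.2 ->
  acc0 (D :\ e).
Proof.
move=> eD /forallP H Hc; apply/forallP => z.
apply: (@connect_inv _ (stp D) (fun z => connect (stp (D :\ e)) ord0 z) ord0) (H z).
  exact: connect0.
move=> u v /= Pu /existsP [a h]; rewrite /=.
case: ((u,a,v) =P e) => [Ee|ne]; first by move: Hc; rewrite -Ee.
apply: connect_trans Pu (connect1 _); apply/existsP; exists a.
by rewrite !inE h andbT; apply/eqP.
Qed.

Lemma two_edges D e e' : acc0 D -> e \in D -> e' \in D -> e != e' -> e.2 = e'.2 ->
  connect (stp (D :\ e)) ord0 e.2 || connect (stp (D :\ e')) ord0 e'.2.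
Proof.
move=> /forallP HA eD e'D ne E2.
pose Z z := connect (stp ((D :\ e) :\ e')) ord0 z.
have sub1 : (D :\ e) :\ e' \subset D :\ e by apply: subD1set.
have sub2 : (D :\ e) :\ e' \subset D :\ e'.
  by apply/subsetP => z; rewrite !inE => /and3P [-> _ ->].
case Hp: (Z e.1.1).
  apply/orP; right; apply: connect_trans (stp_mono sub2 Hp) (connect1 _).
  by rewrite -E2; apply: stp_edge; rewrite !inE eD andbT.
case Hp': (Z e'.1.1).
  apply/orP; left; apply: connect_trans (stp_mono sub1 Hp') (connect1 _).
  by rewrite E2; apply: stp_edge; rewrite !inE e'D andbT eq_sym.
apply/orP; left; apply: (stp_mono sub1).
apply: (@connect_inv _ (stp D) Z ord0) (HA e.2); first exact: connect0.
move=> u v Zu /existsP [a h]; rewrite /Z in Zu *.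
case: ((u,a,v) =P e) => [Ee|ne1].
  by move: Hp; rewrite -Ee => /negbT/negP []; exact: Zu.
case: ((u,a,v) =P e') => [Ee|ne2].
  by move: Hp'; rewrite -Ee => /negbT/negP []; exact: Zu.
apply: connect_trans Zu (connect1 _); apply/existsP; exists a.
by rewrite !inE h andbT; apply/andP; split; apply/eqP.
Qed.

Lemma chain_acc D : Pk n' \subset D -> acc0 D.
Proof.
move=> sP; apply/forallP => q.
suff H : forall j (Hj : j < N), connect (stp D) ord0 (Ordinal Hj).
  by have := H _ (ltn_ord q); rewrite (_ : Ordinal _ = q) //; apply: val_inj.
elim=> [|j IH] Hj.
  by rewrite (_ : Ordinal _ = ord0) ?connect0 //; apply: val_inj.
have Hj' : j < N by apply: ltnW.
apply: connect_trans (IH Hj') (connect1 _); apply/existsP; exists a0.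
have HP : (Ordinal Hj', a0, Ordinal Hj) \in Pk n' by rewrite /Pk inE /= !eqxx; exact: Hj.
exact: (subsetP sP _ HP).
Qed.

Lemma low D k (e2 : edge) : acc0 D -> e2 \in D -> val e2.1.1 = k ->
  (forall e, e \in D -> e \notin Pk k -> ~~ acc0 (D :\ e)) ->
  exists2 l, connect (stp (D :\ e2)) ord0 l & #|out D l| <= 1.
Proof.
move=> HA e2D e2k Hess.
have ess : forall e, e \in D -> e \notin Pk k -> ~~ connect (stp (D :\ e)) ord0 e.2.
  by move=> e eD eP; apply: contra (Hess e eD eP); exact: reroute eD HA.
pose Rch := [set z | connect (stp (D :\ e2)) ord0 z].
have [/exists_inP [l lR Hl]|/exists_inPn Hall] := boolP [exists l in Rch, #|out D l| <= 1].
  by exists l; rewrite // inE in lR.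
exfalso.
pose good z e := [&& e \in D, e.1.1 == z, e \notin Pk k & e != e2].
have ex : forall z, z \in Rch -> exists e, good z e.
  move=> z zR; have Hz := Hall z zR; rewrite -ltnNge in Hz.
  pose B := [set aq : A * 'I_N | ((z, aq.1, aq.2) \in Pk k) || ((z, aq.1, aq.2) == e2)].
  have B1 : #|B| <= 1.
    apply/card_le1_eqP => -[a1 q1] [a2 q2]; rewrite /B /Pk !inE /=.
    case/orP => [/and3P [/eqP-> /eqP h1 k1]|/eqP h1];
      case/orP => [/and3P [/eqP-> /eqP h2 k2]|/eqP h2].
    - by congr pair; apply: ord_inj; rewrite h1 h2.
    - by move: k1; rewrite -e2k -h2 /= ltnn.
    - by move: k2; rewrite -e2k -h1 /= ltnn.
    - by move: h1; rewrite -h2 => -[-> ->].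
  have : 0 < #|out D z :\: B|.
    rewrite cardsD subn_gt0; apply: leq_ltn_trans Hz.
    exact: leq_trans (subset_leq_card (subsetIr _ _)) B1.
  case/card_gt0P => aq; rewrite in_setD => /andP [naB aqD].
  exists (z, aq.1, aq.2); rewrite /good; move: aqD naB; rewrite /out /B !inE negb_or /=.
  by move=> -> /andP [-> ->]; rewrite eqxx.
pose g z := if [pick e | good z e] is Some e then e.2 else ord0.
have gP : forall z, z \in Rch -> exists2 e, good z e & g z = e.2.
  move=> z zR; rewrite /g; case: pickP => [e He|H0]; first by exists e.
  by case: (ex z zR) => e He; move: (H0 e); rewrite He.
have gR : forall z e, z \in Rch -> good z e -> e.2 \in Rch.
  move=> z e; rewrite /Rch !inE => zR /and4P [eD /eqP ez _ ne].
  apply: connect_trans zR (connect1 _); rewrite -ez; apply: stp_edge.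
  by rewrite !inE ne eD.
have g0 : forall z e, good z e -> e.2 != ord0.
  move=> z e /and4P [eD _ eP _]; apply: contraNneq (ess e eD eP) => ->.
  exact: connect0.
have inj : {in Rch &, injective g}.
  move=> z1 z2 z1R z2R; case: (gP z1 z1R) => e1 g1 ->; case: (gP z2 z2R) => e3 g3 -> E13.
  case: (e1 =P e3) => [Ee|ne].
    by move: g1 g3; rewrite Ee /good => /and4P [_ /eqP <- _ _] /and4P [_ /eqP <- _ _].
  move: g1 g3 => /and4P [e1D _ e1P _] /and4P [e3D _ e3P _].
  have ne' : e1 != e3 by apply/eqP.
  by have := two_edges HA e1D e3D ne' E13; rewrite (negbTE (ess _ e1D e1P)) (negbTE (ess _ e3D e3P)).
have sub : g @: Rch \subset Rch :\ ord0.
  apply/subsetP => _ /imsetP [z zR ->]; case: (gP z zR) => e ge ->.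
  by rewrite in_setD1 (g0 _ _ ge) (gR _ _ zR ge).
have o0R : ord0 \in Rch by rewrite inE connect0.
by have := subset_leq_card sub; rewrite (card_in_imset inj) (cardsD1 ord0 Rch) o0R add1n ltnn.
Qed.

Variable Dc : pred {set edge}.
Hypothesis Dc_sub : forall D D' : {set edge}, D' \subset D -> Dc D -> Dc D'.
Hypothesis Dc_add : forall (D : {set edge}) (t : edge), Dc D -> #|out D t.1.1| <= 1 -> Dc (t |: D).
Variables (T : finType) (E : rel T) (f : {set edge} -> T).
Hypothesis Etr : forall D t, acc0 D -> Dc D -> acc0 (toggle D t) -> Dc (toggle D t) ->
  E (f D) (f (toggle D t)).

Lemma Pk_succ k (Hk : k < N) : Pk k.+1 \subset (Ordinal Hk, a0, inord k.+1) |: Pk k.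
Proof.
apply/subsetP => -[[p a] q]; rewrite /Pk !inE /= => /and3P [/eqP -> /eqP hq].
rewrite ltnS leq_eqVlt => /orP [/eqP hp|->]; last by rewrite hq !eqxx /= orbT.
apply/orP; left; apply/eqP; congr (_, _, _); apply: ord_inj => //=.
by rewrite hq hp inordK // -hp -hq ltn_ord.
Qed.

Lemma main_b j : forall k, k + j = n' -> forall D, Pk k \subset D -> acc0 D -> Dc D ->
  connect E (f D) (f (Pk n')).
Proof.
elim: j => [|j IHj] k Hkj D HP HA HD.
  rewrite addn0 in Hkj; subst k.
  apply: (@shrink_lemma _ _ E f (fun D' => acc0 D' && Dc D')) => //.
    by move=> S t /andP [? ?] /andP [? ?]; apply: Etr.
  by move=> D' H1 H2; rewrite (chain_acc H1) (Dc_sub H2 HD).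
have Hk : k < N by rewrite -Hkj ltnS leq_addr.
have Hk' : k < n' by rewrite -Hkj addnS ltnS leq_addr.
have IHk : forall D, Pk k.+1 \subset D -> acc0 D -> Dc D -> connect E (f D) (f (Pk n')).
  by apply: IHj; rewrite addSnnS.
pose kk : 'I_N := Ordinal Hk.
pose ck : edge := (kk, a0, inord k.+1).
suff H : forall mu D, #|D| + #|out D kk| < mu -> Pk k \subset D -> acc0 D -> Dc D ->
  connect E (f D) (f (Pk n')) by apply: (H _ D (ltnSn _)).
elim=> // mu IHmu {HP HA HD} D Hmu HP HA HD.
have ckP : Pk k.+1 \subset ck |: Pk k by apply: Pk_succ.
case ckD : (ck \in D).
  apply: IHk HA HD; apply: subset_trans ckP _.
  by apply/subsetP => t; rewrite in_setU1 => /orP [/eqP ->|tP]; [rewrite ckD | apply: (subsetP HP)].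
case: (boolP [exists e in D :\: Pk k, acc0 (D :\ e)]) => [/exists_inP [e]|Hess].
  rewrite inE => /andP [eP eD] HAe.
  have HDe : Dc (D :\ e) by apply: Dc_sub HD; apply: subD1set.
  apply: connect_trans (connect1 (Etr (t := e) HA HD _ _)) _; rewrite ?toggle_in //.
  apply: IHmu => //.
  - rewrite -ltnS; apply: leq_trans Hmu; rewrite ltnS (cardsD1 e D) eD add1n ltnS.
    by rewrite leq_add2l subset_leq_card //; apply/subsetP => x; rewrite !inE => /andP [_].
  - by apply/subsetP => x xP; rewrite !inE (subsetP HP _ xP) andbT; apply: contraNneq eP => <-.
have ckk : ck.1.1 = kk by [].
case: (leqP #|out D kk| 1) => [Hdeg|Hdeg].
  have ckD' : ck \notin D by rewrite ckD.
  have HA1 : acc0 (ck |: D) by apply: acc0_mono HA; apply: subsetUr.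
  have HD1 : Dc (ck |: D) by apply: Dc_add; rewrite // ckk.
  apply: connect_trans (connect1 (Etr (t := ck) HA HD _ _)) _; rewrite ?toggle_out //.
  apply: IHk HA1 HD1; apply: subset_trans ckP _.
  by apply: setUS.
have Hess' : forall e, e \in D -> e \notin Pk k -> ~~ acc0 (D :\ e).
  by move=> e eD eP; move/exists_inPn: Hess; apply; rewrite inE eP.
have [aq aqo] : exists aq, aq \in out D kk by apply/card_gt0P; apply: ltnW.
pose e2 : edge := (kk, aq.1, aq.2).
have e2D : e2 \in D by move: aqo; rewrite inE.
have e2P : e2 \notin Pk k by rewrite /Pk inE /= ltnn !andbF.
have [l lR Hl] := low HA e2D (erefl k) Hess'.
have lk : l != kk by apply: contraTneq Hl => ->; rewrite -ltnNge.
pose e' : edge := (l, a0, e2.2).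
have e'e2 : e' != e2 by apply: contraNneq lk => /(congr1 (fun x => x.1.1)) /= ->.
have e'D : e' \notin D.
  apply/negP => e'D; move: (Hess' e2 e2D e2P); rewrite (reroute e2D HA) //.
  apply: connect_trans lR (connect1 _); apply: (@stp_edge _ e').
  by rewrite !inE e'D e'e2.
pose D1 := e' |: D.
pose D2 := D1 :\ e2.
have HA1 : acc0 D1 by apply: acc0_mono HA; apply: subsetUr.
have HD1 : Dc D1 by apply: Dc_add.
have e2D1 : e2 \in D1 by rewrite !inE e2D orbT.
have HA2 : acc0 D2.
  apply: reroute e2D1 HA1 _; apply: connect_trans (stp_mono _ lR) (connect1 _).
    by apply: setSD; apply: subsetUr.
  by apply: (@stp_edge _ e'); rewrite !inE eqxx e'e2.
have HD2 : Dc D2 by apply: Dc_sub HD1; apply: subD1set.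
apply: connect_trans (connect1 (Etr (t := e') HA HD _ _)) _; rewrite ?toggle_out //.
rewrite -/D1.
apply: connect_trans (connect1 (Etr (t := e2) HA1 HD1 _ _)) _; rewrite ?toggle_in //.
rewrite -/D2.
apply: IHmu => //.
- rewrite -ltnS; apply: leq_trans Hmu; rewrite ltnS.
  have -> : #|D2| = #|D|.
    have -> : D2 = e' |: (D :\ e2).
      by apply/setP => x; rewrite !inE; case: (x =P e') => // ->; rewrite e'e2.
    by rewrite cardsU1 (cardsD1 e2 D) e2D in_setD1 (negbTE e'D) andbF.
  rewrite ltn_add2l; apply: proper_card; apply/properP; split.
    apply/subsetP => x; rewrite /out !inE => /andP [_ /orP [/eqP He|//]].
    by move: lk; rewrite -[l]/(e'.1.1) -He /= eqxx.
  by exists aq => //; rewrite /out !inE /= eqxx.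
- apply/subsetP => x xP; rewrite /D2 /D1 !inE (subsetP HP _ xP) !orbT andbT.
  by apply: contraNneq e2P => <-.
Qed.

End Core.

Section Bullet.
Variables (n' : nat) (A : finType) (R : realFieldType) (a0 : A).
Local Notation N := n'.+1.
Local Notation edge := ('I_N * A * 'I_N)%type.
Variable (X : pred (nfa N A)) (Dc : pred {set edge}).
Hypothesis XE : forall x, X x = trim x && Dc x.2.
Hypothesis Dc_sub : forall D D' : {set edge}, D' \subset D -> Dc D -> Dc D'.
Hypothesis Dc_add : forall (D : {set edge}) (t : edge), Dc D -> #|out D t.1.1| <= 1 -> Dc (t |: D).

Lemma bullet_irr (r : R) : (0 < #|A|)%N -> (r != 0)%R -> (1 - r != 0)%R ->
  irreducible (bullet X) (Smat_bullet X r).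
Proof.
move=> A0 r0 r1.
pose I0 := [set i : 'I_N | val i == 0%N].
have accE : forall (F : {set 'I_N}) (D : {set edge}), accessible (I0,F,D) = acc0 D.
  move=> F D; rewrite /accessible /acc0; apply/forallP/forallP => H q.
    case/exists_inP: (H q) => i; rewrite inE => /eqP i0 ci.
    by rewrite (_ : ord0 = i) //; apply: val_inj.
  by apply/exists_inP; exists ord0; rewrite ?inE //; apply: H.
have coT : forall (I : {set 'I_N}) (D : {set edge}), coaccessible (I,setT,D).
  by move=> I D; apply/forallP => q; apply/exists_inP; exists q => //; apply: connect0.
have bE : forall D : {set edge}, bullet X (I0,setT,D) = acc0 D && Dc D.
  by move=> D; rewrite /bullet XE /trim accE coT /init /= eqxx !andbT.
apply: (@irr_of_connect _ _ _ _ _ (I0, setT, Pk n' a0 n')) => -[[I F] D] Xx.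
pose E := Esym (bullet X) (Smat (bullet X) 0 r (1-r)).
have II0 : I = I0 by move: Xx; rewrite /bullet => /andP [_ /eqP].
subst I.
have e1 : connect E (I0,F,D) (I0,setT,D).
  apply: (@grow_lemma _ _ E (fun F' => (I0,F',D)) (fun F' => bullet X (I0,F',D))).
    move=> S q XS XS'; rewrite /E /Esym XS XS' Smat_final //=.
    by rewrite -{2}(toggleK S q) Smat_final.
  move=> F' sF; move: Xx; rewrite /bullet !XE /trim /= => /andP [/andP [/andP [H1 H2] ->] ->].
  by rewrite (acc_mono F' (subxx _) (subxx _) H1) (coacc_mono I0 sF (subxx _) H2).
have : bullet X (I0,setT,D) by apply: (connect_inv (P := fun x => bullet X x)) e1 => // u v _ /and4P [].
rewrite bE => /andP [HA HD].
apply: connect_trans e1 _.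
apply: (@main_b n' A a0 Dc Dc_sub Dc_add _ E (fun D => (I0,setT,D)) _ n' 0 (erefl _)) => //.
- move=> D' t H1 H2 H3 H4; rewrite /E /Esym !bE H1 H2 H3 H4 /= Smat_trans //.
  by rewrite -{2}(toggleK D' t) Smat_trans.
- by apply/subsetP => x; rewrite /Pk inE ltn0 !andbF.
Qed.
End Bullet.

Section Classes.
Variables (n' : nat) (A : finType) (m : nat).
Hypothesis m2 : (2 <= m)%N.
Local Notation N := n'.+1.
Local Notation edge := ('I_N * A * 'I_N)%type.

Definition DcM (D : {set edge}) :=
  [forall p : 'I_N, #|[set aq : A * 'I_N | (p, aq.1, aq.2) \in D]| <= m].
Definition DcM' (D : {set edge}) :=
  [forall p : 'I_N, forall a : A, #|[set q : 'I_N | (p, a, q) \in D]| <= m].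

Lemma DcM_sub (D D' : {set edge}) : D' \subset D -> DcM D -> DcM D'.
Proof.
move=> sD /forallP H; apply/forallP => p; apply: leq_trans (H p).
by apply: subset_leq_card; apply/subsetP => x; rewrite !inE; apply: (subsetP sD).
Qed.

Lemma DcM_add (D : {set edge}) (t : edge) : DcM D -> #|out D t.1.1| <= 1 -> DcM (t |: D).
Proof.
move=> /forallP H Ht; apply/forallP => p.
case: (p =P t.1.1) => [->|np].
  apply: leq_trans m2; apply: leq_trans (_ : #|(t.1.2, t.2) |: out D t.1.1| <= 2).
    apply: subset_leq_card; apply/subsetP => x; rewrite /out !inE => /orP [/eqP Ex|->].
      by case: x Ex => a q /= Ex; rewrite -Ex /= eqxx.
    by rewrite orbT.
  by rewrite cardsU1; apply: leq_add (leq_b1 _) Ht.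
apply: leq_trans (H p); apply: subset_leq_card; apply/subsetP => x; rewrite !inE.
case/orP => [/eqP Ex|//]; by move: np; rewrite -Ex.
Qed.

Lemma DcM'_sub (D D' : {set edge}) : D' \subset D -> DcM' D -> DcM' D'.
Proof.
move=> sD /forallP H; apply/forallP => p; apply/forallP => a.
move/forallP: (H p) => /(_ a); apply: leq_trans.
by apply: subset_leq_card; apply/subsetP => x; rewrite !inE; apply: (subsetP sD).
Qed.

Lemma DcM'_add (D : {set edge}) (t : edge) : DcM' D -> #|out D t.1.1| <= 1 -> DcM' (t |: D).
Proof.
move=> /forallP H Ht; apply/forallP => p; apply/forallP => a.
case: (p =P t.1.1) => [->|np].
  apply: leq_trans m2; apply: leq_trans (_ : #|t.2 |: [set q | (t.1.1, a, q) \in D]| <= 2).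
    apply: subset_leq_card; apply/subsetP => x; rewrite !inE => /orP [/eqP Ex|->].
      by rewrite -Ex /= eqxx.
    by rewrite orbT.
  rewrite cardsU1; apply: leq_add (leq_b1 _) _; apply: leq_trans Ht.
  rewrite -(card_imset _ (fun x y (E : (a, x) = (a, y)) => congr1 snd E)).
  apply: subset_leq_card; apply/subsetP => y /imsetP [q]; rewrite ?inE => qD ->.
  by [].
move/forallP: (H p) => /(_ a); apply: leq_trans.
apply: subset_leq_card; apply/subsetP => x; rewrite !inE.
case/orP => [/eqP Ex|//]; by move: np; rewrite -Ex.
Qed.
End Classes.

Local Open Scope ring_scope.

Theorem lemma1 (R : realFieldType) (A : finType) (m n : nat) (r r1 r2 r3 : R) :
  (2 <= #|A|)%N -> (0 < n)%N -> (2 <= m)%N ->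
  0 < r -> r < 1 -> 0 < r1 -> 0 < r2 -> 0 < r3 -> r1 + r2 + r3 <= 1 ->
  (irreducible (classN n A) (Smat (classN n A) r1 r2 r3) /\
   irreducible (classNm n A m) (Smat (classNm n A m) r1 r2 r3) /\
   irreducible (classN'm n A m) (Smat (classN'm n A m) r1 r2 r3)) /\
  (irreducible (bullet (classN n A)) (Smat_bullet (classN n A) r) /\
   irreducible (bullet (classNm n A m)) (Smat_bullet (classNm n A m) r) /\
   irreducible (bullet (classN'm n A m)) (Smat_bullet (classN'm n A m) r)).
Proof.
move=> A2 n0 m2 r0 r1' p1 p2 p3 _.
have A0 : (0 < #|A|)%N by apply: leq_trans A2.
have [a0 _] : exists a0 : A, a0 \in A by apply/card_gt0P.
have s1 := lt0r_neq0 p1; have s2 := lt0r_neq0 p2; have s3 := lt0r_neq0 p3.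
have sr := lt0r_neq0 r0.
have sr' : (1 - r != 0)%R by apply: lt0r_neq0; rewrite subr_gt0.
case: n n0 => // n' _.
have XN : forall x, classN n'.+1 A x = trim x && (fun _ => true) x.2 by move=> x; rewrite andbT.
have XM : forall x, classNm n'.+1 A m x = trim x && DcM m x.2 by [].
have XM' : forall x, classN'm n'.+1 A m x = trim x && DcM' m x.2 by [].
have subN : forall D D' : {set 'I_n'.+1 * A * 'I_n'.+1}, D' \subset D -> true -> true by [].
have addN : forall (D : {set 'I_n'.+1 * A * 'I_n'.+1}) (t : 'I_n'.+1 * A * 'I_n'.+1),
  true -> (#|out D t.1.1| <= 1)%N -> true by [].
split; first split; [|split|].
- exact: nonbullet XN subN _ _ _ _ _ s1 s2 s3.
- exact: nonbullet XM (@DcM_sub _ _ m) _ _ _ _ _ s1 s2 s3.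
- exact: nonbullet XM' (@DcM'_sub _ _ m) _ _ _ _ _ s1 s2 s3.
split; [|split].
- exact: (bullet_irr (X := classN n'.+1 A) a0 XN subN addN A0 sr sr').
- exact: (bullet_irr (X := classNm n'.+1 A m) a0 XM (@DcM_sub _ _ m) (@DcM_add _ _ _ m2) A0 sr sr').
- exact: (bullet_irr (X := classN'm n'.+1 A m) a0 XM' (@DcM'_sub _ _ m) (@DcM'_add _ _ _ m2) A0 sr sr').
Qed.
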